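(* Let $Q$ be a tree quiver, let $(M,x)$ be a radiation module with $M$ exceptional, and let $\mathcal B=\mathcal B(M,x)$ be a radiation basis. Let $\alpha$ be an arrow of $Q$ connecting vertices $y$ and $z$ with $\dim M_y=\dim M_z$. Then, for suitable orderings of the bases $\mathcal B_y$ and $\mathcal B_z$, the matrix of $M_\alpha$ with respect to these bases is the identity matrix.
   Context: $k$ is a field; $Q$ is a locally finite quiver whose underlying graph is a tree; representations are finite-dimensional; $M$ exceptional means indecomposable with $\operatorname{Ext}^1(M,M)=0$. $S(x)$ is the simple at $x$; $Q^x$ is $Q$ with $x$ and its arrows deleted; restriction to $Q^x$ forgets $M_x$ and maps at $x$. Radiation modules (recursive): pairs $(M,x)$, $M$ indecomposable, $\dim M_x=1$; $(S(x),x)$ is one; if $M$ has length $\ge2$, $(M,x)$ is one if the restriction of $M$ to $Q^x$ is $\bigoplus_iN(i)$, $N(i)$ indecomposable, $\operatorname{Hom}(N(i),N(j))=0$ for $i\ne j$, with neighbors $y(i)$ of $x$ such that $(N(i),y(i))$ are radiation modules. Radiation basis containing nonzero $b\in M_x$ (recursive): $\{b\}$ for $S(x)$; otherwise, with $\alpha_i$ the arrow between $x$ and $y(i)$, let $b_i$ be the $N(i)_{y(i)}$-component of $M_{\alpha_i}(b)$ (with respect to $M_{y(i)}=\bigoplus_jN(j)_{y(i)}$) if $\alpha_i\colon x\to y(i)$, and the element of $N(i)_{y(i)}$ with $M_{\alpha_i}(b_i)=b$ if $\alpha_i\colon y(i)\to x$; $\mathcal B(M,x)=\{b\}\cup\bigcup_i\mathcal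 B(N(i),y(i))$ with $\mathcal B(N(i),y(i))$ a radiation basis of $(N(i),y(i))$ containing $b_i$. $\mathcal B_z$ denotes the elements of $\mathcal B$ in $M_z$. *)

(* Defs.v *)
(* Quiver representations over a field K, with the vector
   space at a vertex v being K^(rdim v), realised as row vectors 'rV_(rdim v);
   the map of an arrow a : v -> w acts on row vectors by u |-> u *m rmap a. *)
From HB Require Import structures.
From mathcomp Require Import all_boot all_order all_algebra.
From Stdlib Require List.
Set Implicit Arguments. Unset Strict Implicit. Unset Printing Implicit Defensive.
Import GRing.Theory.
Local Open Scope ring_scope.

Record quiver := Quiver {
  vertex : Type;
  arrow : Type;
  src : arrow -> vertex;
  tgt : arrow -> vertex }.

(* Underlying graph: an undirected walk is a list of steps (a, true) traversing
   arrow a from src to tgt, or (a, false) traversing it from tgt to src. *)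
Inductive walk (Q : quiver) : vertex Q -> vertex Q -> list (arrow Q * bool) -> Prop :=
| walk_nil v : walk v v nil
| walk_cons u w (a : arrow Q) (dir : bool) l :
    (if dir then src a else tgt a) = u ->
    walk (if dir then tgt a else src a) w l ->
    walk u w ((a, dir) :: l).

Fixpoint reduced (Q : quiver) (l : list (arrow Q * bool)) : Prop :=
  match l with
  | s1 :: ((s2 :: _) as l') => s1.1 <> s2.1 /\ reduced l'
  | _ => True
  end.

(* The underlying (multi)graph is a tree: between any two vertices there is
   exactly one reduced walk (this excludes loops, multiple edges, cycles, and
   forces connectedness). *)
Definition is_tree (Q : quiver) : Prop :=
  forall u w : vertex Q, exists! l, walk u w l /\ reduced l.

Definition locally_finite (Q : quiver) : Prop :=
  forall v : vertex Q, exists l : list (arrow Q),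
    forall a, src a = v \/ tgt a = v -> List.In a l.

Record rep (K : fieldType) (Q : quiver) := Rep {
  rdim : vertex Q -> nat;
  rmap : forall a : arrow Q, 'M[K]_(rdim (src a), rdim (tgt a)) }.

Section Reps.
Variables (K : fieldType) (Q : quiver) (M : rep K Q).
Local Notation d := (rdim M).
Local Notation A := (rmap M).

Definition finite_dim : Prop :=
  exists l : list (vertex Q), forall v, (0 < d v)%N -> List.In v l.

(* A family of subspaces U v <= K^(d v) (row spaces of the matrices U v). *)
Definition family := forall v : vertex Q, 'M[K]_(d v).

Definition in_sub (T : vertex Q -> Prop) (a : arrow Q) := T (src a) /\ T (tgt a).

(* (T, U) is a subrepresentation of the restriction of M to the full subquiver
   on T: U vanishes outside T and is stable under the arrows inside T. *)
Definition is_piece (T : vertex Q -> Prop) (U : family) : Prop :=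
  (forall v, ~ T v -> (U v == (0 : 'M_(d v)))%MS) /\
  (forall a, in_sub T a -> (U (src a) *m A a <= U (tgt a))%MS).

Definition subpiece T (U W : family) : Prop :=
  is_piece T W /\ forall v, (W v <= U v)%MS.

Definition piece_zero (U : family) : Prop := forall v, (U v == (0 : 'M_(d v)))%MS.

Definition indecomposable_piece T (U : family) : Prop :=
  is_piece T U /\ ~ piece_zero U /\
  forall W1 W2, subpiece T U W1 -> subpiece T U W2 ->
    (forall v, (W1 v + W2 v == U v)%MS /\ ((W1 v :&: W2 v) == (0 : 'M_(d v)))%MS) ->
    piece_zero W1 \/ piece_zero W2.

(* Hom((T,U1),(T,U2)) = 0: every family of linear maps U1 v -> U2 v (given by
   matrices F v, restricted to U1 v) commuting with the arrows of the
   subquiver is zero. *)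
Definition hom_zero T (U1 U2 : family) : Prop :=
  forall F : family,
    (forall v, (U1 v *m F v <= U2 v)%MS) ->
    (forall a, in_sub T a -> forall u : 'rV[K]_(d (src a)),
        (u <= U1 (src a))%MS -> u *m A a *m F (tgt a) = u *m F (src a) *m A a) ->
    forall v, U1 v *m F v = 0.

Definition all_vertices : vertex Q -> Prop := fun _ => True.
Definition full_family : family := fun v => 1%:M.

Definition indecomposable : Prop := indecomposable_piece all_vertices full_family.

(* Ext^1(M,M) = 0, with Ext^1 the cokernel of the standard map
   (f_v)_v |-> (M_a f_{ta} - f_{sa} M_a)_a  (Ringel's exact sequence). *)
Definition ext1_self_zero : Prop :=
  forall G : forall a : arrow Q, 'M[K]_(d (src a), d (tgt a)),
  exists F : family, forall a, G a = A a *m F (tgt a) - F (src a) *m A a.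

Definition exceptional : Prop := indecomposable /\ ext1_self_zero.

Definition elt := {v : vertex Q & 'rV[K]_(d v)}.

Definition remove_vertex (T : vertex Q -> Prop) (x : vertex Q) : vertex Q -> Prop :=
  fun v => T v /\ v <> x.

(* rad_basis T U x b B : (T,U) (a representation of the full subquiver on T,
   sitting inside M) together with x is a radiation module, and B is a
   radiation basis of it containing the nonzero vector b of its space at x,
   built from the chosen decompositions.  The restriction to Q^x is decomposed
   as an internal direct sum of the N i; al i is the arrow between x and the
   neighbour y(i) = projT1 (bs i), and projT2 (bs i) is the vector b_i. *)
Inductive rad_basis : (vertex Q -> Prop) -> family ->
    forall x : vertex Q, 'rV[K]_(d x) -> (elt -> Prop) -> Prop :=
| rad_simple (T : vertex Q -> Prop) (U : family) (x : vertex Q)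
    (b : 'rV[K]_(d x)) (B : elt -> Prop) :
    T x -> is_piece T U ->
    \rank (U x) = 1%N -> (forall v, v <> x -> (U v == (0 : 'M_(d v)))%MS) ->
    b != 0 -> (b <= U x)%MS ->
    (forall p, B p <-> p = existT (fun v => 'rV[K]_(d v)) x b) ->
    @rad_basis T U x b B
| rad_step (T : vertex Q -> Prop) (U : family) (x : vertex Q)
    (b : 'rV[K]_(d x)) (B : elt -> Prop) (n : nat) (N : 'I_n -> family) (al : 'I_n -> arrow Q)
    (bs : 'I_n -> elt) (Bs : 'I_n -> elt -> Prop) :
    T x -> indecomposable_piece T U ->
    \rank (U x) = 1%N ->
    (exists v, v <> x /\ ~~ (U v == (0 : 'M_(d v)))%MS) ->  (* length >= 2 *)
    b != 0 -> (b <= U x)%MS ->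
    (forall i, is_piece (remove_vertex T x) (N i)) ->
    (forall v, remove_vertex T x v ->
       (\sum_i N i v == U v)%MS /\ mxdirect (\sum_i N i v)) ->
    (forall i, indecomposable_piece (remove_vertex T x) (N i)) ->
    (forall i j, i != j -> hom_zero (remove_vertex T x) (N i) (N j)) ->
    (forall i,
      (src (al i) = x /\
        exists u : 'rV[K]_(d (src (al i))),
          existT _ (src (al i)) u = existT (fun v => 'rV[K]_(d v)) x b /\
          exists w : 'rV[K]_(d (tgt (al i))),
            existT _ (tgt (al i)) w = bs i /\
            (w <= N i (tgt (al i)))%MS /\
            (u *m A (al i) - w <= \sum_(j | j != i) N j (tgt (al i)))%MS)
      \/
      (tgt (al i) = x /\
        exists u : 'rV[K]_(d (tgt (al i))),
          existT _ (tgt (al i)) u = existT (fun v => 'rV[K]_(d v)) x b /\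
          exists w : 'rV[K]_(d (src (al i))),
            existT _ (src (al i)) w = bs i /\
            (w <= N i (src (al i)))%MS /\ w *m A (al i) = u /\
            (forall w' : 'rV[K]_(d (src (al i))),
               (w' <= N i (src (al i)))%MS -> w' *m A (al i) = u -> w' = w))) ->
    (forall i, @rad_basis (remove_vertex T x) (N i) (projT1 (bs i)) (projT2 (bs i)) (Bs i)) ->
    (forall p, B p <-> p = existT (fun v => 'rV[K]_(d v)) x b \/ exists i, Bs i p) ->
    @rad_basis T U x b B.

Definition radiation_basis (x : vertex Q) (B : elt -> Prop) : Prop :=
  exists b : 'rV[K]_(d x), @rad_basis all_vertices full_family x b B.

Definition ordered_basis_of (B : elt -> Prop) (v : vertex Q) (n : nat)
    (E : 'M[K]_(n, d v)) : Prop :=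
  row_free E /\ row_full E /\
  forall u : 'rV[K]_(d v), B (existT _ v u) <-> exists i, row i E = u.

End Reps.

Arguments finite_dim {K Q} M.
Arguments exceptional {K Q} M.
Arguments elt {K Q} M.
Arguments radiation_basis {K Q} M x B.
Arguments ordered_basis_of {K Q} M B v {n} E.

(* Main.v *)
Require Import Defs.
From HB Require Import structures.
From mathcomp Require Import all_boot all_order all_algebra.
From Stdlib Require Import ClassicalEpsilon Classical Eqdep.
From mathcomp Require Import zify.
Set Implicit Arguments. Unset Strict Implicit. Unset Printing Implicit Defensive.
Import GRing.Theory.
Local Open Scope ring_scope.
Section Walks.
Variable Q : quiver.

Lemma walk_consE (u z : vertex Q) p l :
  walk u z (p :: l) -> (if p.2 then src p.1 else tgt p.1) = u /\
     walk (if p.2 then tgt p.1 else src p.1) z l.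
Proof. by move=> h; inversion h; subst. Qed.

Lemma walk_nilE (u z : vertex Q) : walk u z [::] -> u = z.
Proof. by move=> h; inversion h. Qed.

Lemma walk_rcons (u w z : vertex Q) l r :
  walk u w l -> walk w z [:: r] -> walk u z (rcons l r).
Proof.
elim=> [v|u' w' a dir l' e hw IH] //= h; exact: walk_cons e (IH h).
Qed.

Lemma walk_rconsE (u z : vertex Q) l r :
  walk u z (rcons l r) -> exists w, walk u w l /\ walk w z [:: r].
Proof.
elim: l u => [|p l IH] u /=.
  by move=> h; exists u; split => //; constructor.
move=> /walk_consE [e h].
have [w' [h1 h2]] := IH _ h.
by exists w'; split => //; case: p e h1 {h} => a d e h1; constructor.
Qed.

Lemma reduced_rcons (p r : arrow Q * bool) l :
  reduced (p :: l) -> (last p l).1 <> r.1 -> reduced (rcons (p :: l) r).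
Proof.
elim: l p => [|q l IH] p /=; first by move=> _ h; split.
by move=> [h1 h2] h; split => //; exact: IH.
Qed.

Lemma reduced_rcons_pre (p r : arrow Q * bool) l :
  reduced (rcons (p :: l) r) -> reduced (p :: l).
Proof.
elim: l p => [|q l IH] p //=.
by move=> [h1 h2]; split => //; exact: IH.
Qed.
End Walks.
Section Side.
Variable Q : quiver.
Definition Pside (c : vertex Q) (a : arrow Q) (v : vertex Q) :=
  exists p l, walk c v (p :: l) /\ reduced (p :: l) /\ p.1 = a.

Lemma Pside_step c a u w (b : arrow Q) (dir : bool) :
  Pside c a u -> (if dir then src b else tgt b) = u ->
  (if dir then tgt b else src b) = w -> w <> c -> Pside c a w.
Proof.
move=> [p [l [hw [hr ha]]]] hu hwe hwc.
have hstep : walk u w [:: (b, dir)].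
  by constructor => //; rewrite hwe; constructor.
case: (classic ((last p l).1 = b)) => hl; last first.
  exists p, (rcons l (b, dir)); split; last split => //.
  - by rewrite -rcons_cons; exact: walk_rcons hw hstep.
  - by rewrite -rcons_cons; apply: reduced_rcons.
have hP : Pside c a u by exists p, l.
move: hw hr; rewrite lastI => hw hr.
have [mid [h1 h2]] := walk_rconsE hw.
move: h2; case: (last p l) hl => b' d /= -> /walk_consE [e1 /walk_nilE e2].
have hmw : mid = w \/ w = u.
  by clear hstep; case: d dir e1 e2 hu hwe => [] [] /= e1 e2 e3 e4; subst; auto.
case: hmw => [hmw|hwu]; last by rewrite hwu.
rewrite hmw in h1.
clear hw hP; case: l h1 hr => [|q l'] /= h1 hr.
  by move/walk_nilE: h1 => e; exfalso; exact: hwc (esym e).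
exists p, (belast q l'); split => //; split => //.
exact: (@reduced_rcons_pre _ p (last q l') (belast q l') hr).
Qed.
End Side.
Section Reps.
Variables (K : fieldType) (Q : quiver) (M : rep K Q).
Local Notation d := (rdim M).
Local Notation A := (rmap M).
Hypothesis tree : is_tree Q.

Lemma tree_uniq (u w : vertex Q) l1 l2 :
  walk u w l1 -> reduced l1 -> walk u w l2 -> reduced l2 -> l1 = l2.
Proof.
move=> h1 r1 h2 r2; have [l [_ hu]] := tree u w.
by rewrite -(hu l1 (conj h1 r1)) -(hu l2 (conj h2 r2)).
Qed.

Lemma no_loop (a : arrow Q) : src a <> tgt a.
Proof.
move=> e.
have h1 : walk (src a) (src a) [:: (a, true)] by constructor => //=; rewrite -e; constructor.
have := tree_uniq h1 I (walk_nil _) I; done.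
Qed.

Definition sel (P : Prop) (v : vertex Q) (X : 'M[K]_(d v)) : 'M[K]_(d v) :=
  if excluded_middle_informative P then X else 0.

Lemma selT (P : Prop) v (X : 'M[K]_(d v)) : P -> sel P X = X.
Proof. by rewrite /sel; case: excluded_middle_informative. Qed.
Lemma selF (P : Prop) v (X : 'M[K]_(d v)) : ~ P -> sel P X = 0.
Proof. by rewrite /sel; case: excluded_middle_informative. Qed.

Lemma side_contra T c (N : Defs.family M) (a1 a2 : arrow Q) (y1 y2 : vertex Q) (dir1 dir2 : bool) :
  indecomposable_piece (remove_vertex T c) N ->
  (if dir1 then src a1 else tgt a1) = c -> (if dir1 then tgt a1 else src a1) = y1 ->
  (if dir2 then src a2 else tgt a2) = c -> (if dir2 then tgt a2 else src a2) = y2 ->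
  a1 <> a2 -> ~~ (N y1 == (0 : 'M_(d y1)))%MS -> ~~ (N y2 == (0 : 'M_(d y2)))%MS -> False.
Proof.
move=> [[Nv Ns] [_ Nind]] c1 e1 c2 e2 a12 n1 n2.
pose P := Pside c a1.
pose W1 : Defs.family M := fun v => sel (P v) (N v).
pose W2 : Defs.family M := fun v => sel (~ P v) (N v).
have Py1 : P y1.
  exists (a1, dir1), [::]; split => //; constructor => //; rewrite e1; constructor.
have nPy2 : ~ P y2.
  move=> [p [l [hw [hr ha]]]].
  have hw2 : walk c y2 [:: (a2, dir2)] by constructor => //; rewrite e2; constructor.
  have := tree_uniq hw hr hw2 I; case=> hp _; rewrite hp /= in ha; exact: a12 (esym ha).
have stepP : forall b, in_sub (remove_vertex T c) b -> (P (src b) <-> P (tgt b)).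
  move=> b [[_ hs] [_ ht]]; split => h.
  - exact: (@Pside_step _ c a1 _ _ b true h erefl erefl ht).
  - exact: (@Pside_step _ c a1 _ _ b false h erefl erefl hs).
have sub1 : subpiece (remove_vertex T c) N W1.
  split; last first.
    move=> v; rewrite /W1; case: (classic (P v)) => h; [rewrite selT // submx_refl // | rewrite selF // sub0mx //].
  split.
    move=> v hv; rewrite /W1; case: (classic (P v)) => h; [rewrite selT //; exact: Nv | by rewrite selF //; apply/eqmx0P].
  move=> b hb; rewrite /W1.
  case: (classic (P (src b))) => h1; last by rewrite selF // mul0mx sub0mx.
  rewrite selT // selT; first exact: Ns.
  by apply/(stepP b hb).
have sub2 : subpiece (remove_vertex T c) N W2.
  split; last first.
    move=> v; rewrite /W2; case: (classic (P v)) => h; [rewrite selF // sub0mx // | rewrite selT // submx_refl //].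
  split.
    move=> v hv; rewrite /W2; case: (classic (P v)) => h; [by rewrite selF //; apply/eqmx0P | rewrite selT //; exact: Nv].
  move=> b hb; rewrite /W2.
  case: (classic (P (src b))) => h1; first by rewrite selF // mul0mx sub0mx.
  rewrite selT // selT; first exact: Ns.
  by move=> h2; apply: h1; apply/(stepP b hb).
have := Nind W1 W2 sub1 sub2.
case.
- move=> v; rewrite /W1 /W2.
  case: (classic (P v)) => h.
  + by rewrite selT // selF // addsmx0_id capmx0; split; apply/andP; split; rewrite ?submx_refl ?sub0mx.
  + by rewrite selF // selT // adds0mx_id cap0mx; split; apply/andP; split; rewrite ?submx_refl ?sub0mx.
- move=> h; move: (h y1); rewrite /W1 selT //.
  by rewrite (negbTE n1).
- move=> h; move: (h y2); rewrite /W2 selT //.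
  by rewrite (negbTE n2).
Qed.
End Reps.
Section Elems.
Variables (K : fieldType) (Q : quiver) (M : rep K Q).
Local Notation d := (rdim M).
Local Notation A := (rmap M).
Local Notation ex v u := (existT (fun w : vertex Q => 'rV[K]_(d w)) v u).

Lemma exE (v c : vertex Q) (u : 'rV[K]_(d v)) (b : 'rV[K]_(d c)) :
  ex v u = ex c b -> exists e : v = c, ex v u = ex v (eq_rect_r (fun w => 'rV[K]_(d w)) b e).
Proof. by move=> h; case: h => e; subst c; exists erefl. Qed.

Lemma exE2 (v : vertex Q) (u b : 'rV[K]_(d v)) : ex v u = ex v b -> u = b.
Proof. exact: inj_pair2. Qed.

Lemma rb_elems T U c b B : @rad_basis K Q M T U c b B ->
  forall v u, B (ex v u) -> u != 0 /\ (u <= U v)%MS.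
Proof.
elim=> {T U c b B}.
- move=> T U c b B Tc Up rk Uz bn0 bU hB v u /hB e.
  have ev : v = c by have := f_equal (@projT1 _ _) e.
  subst v; move/exE2: e => ->; done.
- move=> T U c b B n N al bs Bs Tc Uind rk ex2 bn0 bU Np Nsum Nind Nhom Nal Nrb IH hB v u /hB [e|[i hi]].
  + have ev : v = c by have := f_equal (@projT1 _ _) e.
    subst v; move/exE2: e => ->; done.
  + have [un0 uN] := IH i v u hi; split => //.
    case: (classic (remove_vertex T c v)) => hv.
      have [/andP [hs1 _] _] := Nsum v hv.
      apply: submx_trans uN _; apply: submx_trans hs1.
      exact: (sumsmx_sup i).
    have := (Np i).1 v hv => /eqmx0P z.
    by move: uN; rewrite z submx0 (negbTE un0).
Qed.

Lemma rb_center T U c b B : @rad_basis K Q M T U c b B ->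
  forall u, B (ex c u) <-> u = b.
Proof.
case=> {T U c b B}.
- move=> T U c b B Tc Up rk Uz bn0 bU hB u; rewrite hB; split; first exact: exE2.
  by move=> ->.
- move=> T U c b B n N al bs Bs Tc Uind rk ex2 bn0 bU Np Nsum Nind Nhom Nal Nrb hB u.
  rewrite hB; split; last by move=> ->; left.
  case; first exact: exE2.
  move=> [i hi]; have [un0 uN] := rb_elems (Nrb i) hi.
  have := (Np i).1 c (fun h => h.2 erefl) => /eqmx0P z.
  by move: uN; rewrite z submx0 (negbTE un0).
Qed.

Lemma rb_rank T U c b B : @rad_basis K Q M T U c b B -> \rank (U c) = 1%N.
Proof. by case. Qed.
End Elems.
Section Ext.
Variables (K : fieldType) (Q : quiver) (M : rep K Q).
Local Notation d := (rdim M).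
Local Notation A := (rmap M).

Lemma ext_free (al : arrow Q) : ext1_self_zero M -> d (src al) = d (tgt al) -> row_free (A al).
Proof.
move=> hext hd; apply/negPn/negP => nf.
have rlt : (\rank (A al) < d (src al))%N.
  by rewrite ltn_neqAle nf rank_leq_row.
have : ~~ (kermx (A al) <= (0 : 'M_(d (src al))))%MS.
  rewrite submx0; apply/negP => /eqP z.
  by move: (mxrank_ker (A al)); rewrite z mxrank0 => /esym/eqP; rewrite subn_eq0 leqNgt rlt.
case/row_subPn => i; rewrite submx0 => kn0.
set k := row i (kermx (A al)) in kn0.
have kA : k *m A al = 0 by apply/sub_kermxP; exact: row_sub.
have : ~~ (1%:M <= A al)%MS.
  rewrite sub1mx /row_full; apply/negP => /eqP e.
  by move: rlt; rewrite e hd ltnn.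
case/row_subPn => j nv.
set v := row j (1%:M : 'M[K]_(d (tgt al))) in nv.
have kfree : row_free k by rewrite /row_free rank_rV kn0.
have [K' kK] := row_freeP kfree.
pose g := K' *m v.
have kg : k *m g = v by rewrite /g mulmxA kK mul1mx.
pose G := fun a : arrow Q =>
  match excluded_middle_informative (a = al) with
  | left e => eq_rect_r (fun a => 'M[K]_(d (src a), d (tgt a))) g e
  | right _ => 0 end.
have Gal : G al = g.
  rewrite /G; case: excluded_middle_informative => // e.
  by rewrite (UIP_refl _ _ e).
have [F hF] := hext G.
move: (hF al); rewrite Gal => hg.
apply: (negP nv).
rewrite -kg hg mulmxBr mulmxA kA mul0mx sub0r mulmxA -mulNmx.
exact: submxMl.
Qed.
End Ext.

Section Main.
Variables (K : fieldType) (Q : quiver) (M : rep K Q).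
Local Notation d := (rdim M).
Local Notation ex v u := (existT (fun w : vertex Q => 'rV[K]_(d w)) v u).
Hypothesis tree : is_tree Q.
Variable al : arrow Q.
Local Notation s := (src al).
Local Notation t := (tgt al).
Local Notation A := (rmap M al).
Hypothesis Afree : row_free A.

Lemma subB_sub m n (a b : 'M[K]_(m,n)) p (C : 'M_(p,n)) :
  (a <= C)%MS -> (b <= C)%MS -> (a - b <= C)%MS.
Proof. move=> ha hb; apply: addmx_sub ha _; by rewrite eqmx_opp. Qed.

Lemma nz_of_rank v (X : 'M[K]_(d v)) : \rank X = 1%N -> ~~ (X == (0 : 'M_(d v)))%MS.
Proof. by move=> h; apply/negP => /eqmx0P z; move: h; rewrite z mxrank0. Qed.

Lemma nzE v (X : 'M[K]_(d v)) : ~~ (X == (0 : 'M_(d v)))%MS -> X != 0.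
Proof. by move=> h; apply: contra h => /eqP ->; apply/eqmx0P. Qed.

Lemma sum_eq_le (n : nat) (f g : 'I_n -> nat) :
  (forall j, f j <= g j)%N -> (\sum_j f j = \sum_j g j)%N -> forall j, f j = g j.
Proof.
move=> le e j; move: e; rewrite (bigD1 j) //= [in RHS](bigD1 j) //=.
set X := bigop _ _ _; set Y := bigop _ _ _.
have : (X <= Y)%N by apply: leq_sum.
move: (le j) => h1 h2 h3; lia.
Qed.

Lemma exP1 v w (u : 'rV[K]_(d v)) (u' : 'rV[K]_(d w)) : ex v u = ex w u' -> v = w.
Proof. by move=> e; have := f_equal (@projT1 _ _) e. Qed.

Lemma claim T U c b B : @rad_basis K Q M T U c b B -> (U s *m A == U t)%MS ->
  (forall u, B (ex s u) -> B (ex t (u *m A))) /\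
  (forall w, B (ex t w) -> exists u, B (ex s u) /\ w = u *m A).
Proof.
move=> RB0; elim: RB0 => {T U c b B}.
- move=> T U c b B Tc Up rk Uz bn0 bU hB H.
  have rkST : \rank (U s) = \rank (U t).
    by rewrite -(mxrankMfree _ Afree); exact: eqmx_rank H.
  have ls := no_loop tree (a:=al).
  have sc : s <> c.
    move=> e; subst c; have := Uz t (fun e => ls (esym e)) => /eqmx0P z.
    by move: rkST; rewrite rk z mxrank0.
  have tc : t <> c.
    move=> e; subst c; have := Uz s ls => /eqmx0P z.
    by move: rkST; rewrite rk z mxrank0.
  split.
  + by move=> u /hB /exP1.
  + by move=> w /hB /exP1.
- move=> T U c b B n N al0 bs Bs Tc Uind rk ex2 bn0 bU Np Nsum Nind Nhom Nal Nrb IH hB H.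
  have RB : @rad_basis K Q M T U c b B by eapply rad_step; eassumption.
  have rkST : \rank (U s) = \rank (U t).
    by rewrite -(mxrankMfree _ Afree); exact: eqmx_rank H.
  have ls := no_loop tree (a:=al).
  have Uvan : forall v, ~ T v -> U v = 0.
    by move=> v hv; apply/eqmx0P; exact: Uind.1.1 v hv.
  have Nsub : forall j v, remove_vertex T c v -> (N j v <= U v)%MS.
    move=> j v hv; have [/andP [h1 _] _] := Nsum v hv; apply: submx_trans h1.
    exact: (sumsmx_sup j).
  have Nz : forall j v, ~ remove_vertex T c v -> N j v = 0.
    by move=> j v hv; apply/eqmx0P; exact: (Np j).1 v hv.
  have elemB := rb_elems RB.
  have yrk : forall j, \rank (N j (projT1 (bs j))) = 1%N := fun j => rb_rank (Nrb j).
  have exj : forall v, remove_vertex T c v -> ~~ (U v == (0 : 'M_(d v)))%MS ->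
      exists j, ~~ (N j v == (0 : 'M_(d v)))%MS.
    move=> v hv nz; apply: NNPP => hn; apply: (negP nz).
    have [/andP [_ h2] _] := Nsum v hv; apply/eqmx0P/eqP; rewrite -submx0.
    apply: submx_trans h2 _.
    apply/sumsmx_subP => j _; apply: NNPP => hj; apply: hn; exists j.
    by apply/negP => /eqmx0P z; apply: hj; rewrite z submx_refl.
  have Bsj : forall j v u, Bs j (ex v u) -> B (ex v u).
    by move=> j v u h; apply/hB; right; exists j.
  have Bsplit : forall v u, v <> c -> B (ex v u) -> exists j, Bs j (ex v u) /\ ~~ (N j v == (0 : 'M_(d v)))%MS.
    move=> v u vc /hB [/exP1 //|[j hj]]; exists j; split => //.
    have [un0 uN] := rb_elems (Nrb j) hj.
    by apply/negP => /eqmx0P z; move: uN; rewrite z submx0 (negbTE un0).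
  case: (classic (s = c)) => [esc|sc].
  { subst c.
    have ts : t <> s by move=> e; exact: ls (esym e).
    have rkt : \rank (U t) = 1%N by rewrite -rkST.
    have Tt : T t.
      by apply: NNPP => nt; move: rkt; rewrite (Uvan t nt) mxrank0.
    have Rt : remove_vertex T s t by split.
    have [NsumT dirT] := Nsum t Rt.
    have bAt : (b *m A <= U t)%MS.
      by apply: submx_trans (submxMr A bU) _; case/andP: H.
    have key : forall j, ~~ (N j t == (0 : 'M_(d t)))%MS ->
        forall w', Bs j (ex t w') <-> w' = b *m A.
    { move=> j nz.
      have ej : al0 j = al.
      { apply: NNPP => nej.
        case: (Nal j) => [[e1 [u [_ [w [ebs _]]]]] | [e1 [u [_ [w [ebs _]]]]]].
        - have n2 : ~~ (N j (tgt (al0 j)) == (0 : 'M_(d (tgt (al0 j)))))%MS.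
            by move: (yrk j); rewrite -ebs /= => /nz_of_rank.
          exact: (side_contra tree (Nind j) (dir1:=true) (dir2:=true) erefl erefl e1 erefl (fun e => nej (esym e)) nz n2).
        - have n2 : ~~ (N j (src (al0 j)) == (0 : 'M_(d (src (al0 j)))))%MS.
            by move: (yrk j); rewrite -ebs /= => /nz_of_rank.
          exact: (side_contra tree (Nind j) (dir1:=true) (dir2:=false) erefl erefl e1 erefl (fun e => nej (esym e)) nz n2). }
      move: (Nal j) (Nrb j); rewrite ej.
      case=> [[_ [u [eu [w [ebs [wN wc]]]]]] | [e1 _]]; last by exfalso; exact: ts e1.
      move/exE2: eu => eu; subst u.
      rewrite -ebs /= => rbj w'; rewrite (rb_center rbj).
      suff -> : w = b *m A by [].
      have eNU : (N j t == U t)%MS.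
        rewrite -(mxrank_leqif_eq (Nsub j t Rt)).2 rkt eqn_leq.
        rewrite -{1}rkt (mxrank_leqif_eq (Nsub j t Rt)).1 /= lt0n mxrank_eq0.
        exact: nzE.
      have bAN : (b *m A <= N j t)%MS by case/andP: eNU => _ h; exact: submx_trans bAt h.
      have hd := (mxdirect_sumsP dirT) j isT.
      have : (b *m A - w <= (N j t :&: \sum_(k | true && (k != j)) N k t))%MS.
        by rewrite sub_capmx (subB_sub bAN wN); exact: wc.
      by rewrite hd submx0 subr_eq0 => /eqP ->. }
    split.
    + move=> u /(rb_center RB) ->.
      have [j nz] := exj t Rt (nz_of_rank rkt).
      by apply: (Bsj j); apply/(key j nz).
    + move=> w /(Bsplit t w ts) [j [hj nz]].
      exists b; split; first by apply/(rb_center RB).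
      exact/(key j nz). }
  case: (classic (t = c)) => [etc|tc].
  { subst c.
    have st : s <> t := ls.
    have rks : \rank (U s) = 1%N by rewrite rkST.
    have Ts : T s by apply: NNPP => ns; move: rks; rewrite (Uvan s ns) mxrank0.
    have Rs : remove_vertex T t s by split.
    have key : forall j, ~~ (N j s == (0 : 'M_(d s)))%MS ->
        exists wj, wj *m A = b /\ forall w', Bs j (ex s w') <-> w' = wj.
    { move=> j nz.
      have ej : al0 j = al.
      { apply: NNPP => nej.
        case: (Nal j) => [[e1 [u [_ [w [ebs _]]]]] | [e1 [u [_ [w [ebs _]]]]]].
        - have n2 : ~~ (N j (tgt (al0 j)) == (0 : 'M_(d (tgt (al0 j)))))%MS.
            by move: (yrk j); rewrite -ebs /= => /nz_of_rank.
          exact: (side_contra tree (Nind j) (dir1:=false) (dir2:=true) erefl erefl e1 erefl (fun e => nej (esym e)) nz n2).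
        - have n2 : ~~ (N j (src (al0 j)) == (0 : 'M_(d (src (al0 j)))))%MS.
            by move: (yrk j); rewrite -ebs /= => /nz_of_rank.
          exact: (side_contra tree (Nind j) (dir1:=false) (dir2:=false) erefl erefl e1 erefl (fun e => nej (esym e)) nz n2). }
      move: (Nal j) (Nrb j); rewrite ej.
      case=> [[e1 _] | [_ [u [eu [w [ebs [wN [wA _]]]]]]]]; first by exfalso; exact: st e1.
      move/exE2: eu => eu; subst u.
      rewrite -ebs /= => rbj; exists w; split => // w'; exact: (rb_center rbj w'). }
    split.
    + move=> u /(Bsplit s u st) [j [hj nz]].
      have [wj [wA hw]] := key j nz.
      move/hw: hj => ->; rewrite wA; exact/(rb_center RB).
    + move=> w /(rb_center RB) ->.
      have [j nz] := exj s Rs (nz_of_rank rks).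
      have [wj [wA hw]] := key j nz.
      exists wj; split; last by rewrite wA.
      by apply: (Bsj j); apply/hw. }
  case: (classic (T s /\ T t)) => [[Ts Tt]|nT]; last first.
  { have z : U s = 0 /\ U t = 0.
      case: (classic (T s)) => Ts.
      - have nTt : ~ T t by move=> Tt; apply: nT.
        have zt := Uvan t nTt; split => //.
        by apply/eqP; rewrite -mxrank_eq0 rkST zt mxrank0.
      - have zs := Uvan s Ts; split => //.
        by apply/eqP; rewrite -mxrank_eq0 -rkST zs mxrank0.
    have noB : forall v u, U v = 0 -> ~ B (ex v u).
      move=> v u zv /elemB [un0 uU]; move: uU; rewrite zv submx0 => /eqP e.
      by rewrite e eqxx in un0.
    split.
    + by move=> u /(noB _ _ z.1).
    + by move=> w /(noB _ _ z.2). }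
  have Rs : remove_vertex T c s by split.
  have Rt : remove_vertex T c t by split.
  have [NsumS dirS] := Nsum s Rs.
  have [NsumT dirT] := Nsum t Rt.
  have NA : forall j, (N j s *m A <= N j t)%MS by move=> j; apply: (Np j).2; split.
  have rle : forall j, (\rank (N j s) <= \rank (N j t))%N.
    by move=> j; rewrite -(mxrankMfree _ Afree); exact: mxrankS (NA j).
  have e1 : \rank (\sum_i N i s) = (\sum_i \rank (N i s))%N by apply/mxdirectP.
  have e2 : \rank (\sum_i N i t) = (\sum_i \rank (N i t))%N by apply/mxdirectP.
  have sumeq : (\sum_i \rank (N i s))%N = (\sum_i \rank (N i t))%N.
    by rewrite -e1 -e2 (eqmx_rank NsumS) (eqmx_rank NsumT).
  have Hj : forall j, (N j s *m A == N j t)%MS.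
    move=> j; rewrite -(mxrank_leqif_eq (NA j)).2 (mxrankMfree _ Afree).
    by rewrite (sum_eq_le rle sumeq j).
  split.
  + move=> u /(Bsplit s u sc) [j [hj _]].
    exact: (Bsj j _ _ ((IH j (Hj j)).1 u hj)).
  + move=> w /(Bsplit t w tc) [j [hj _]].
    have [u [hu ->]] := (IH j (Hj j)).2 w hj.
    by exists u; split => //; exact: (Bsj j).
Qed.
End Main.

Section Basis.
Variables (K : fieldType) (Q : quiver) (M : rep K Q).
Local Notation d := (rdim M).
Local Notation ex v u := (existT (fun w : vertex Q => 'rV[K]_(d w)) v u).

Definition mxofs m (l : seq 'rV[K]_m) : 'M[K]_(size l, m) := \matrix_(i < size l) nth 0 l i.

Lemma mxofs_row m (l : seq 'rV[K]_m) u : (exists i, row i (mxofs l) = u) <-> u \in l.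
Proof.
split.
- by move=> [i <-]; rewrite rowK mem_nth.
- move=> h; have hi : (index u l < size l)%N by rewrite index_mem.
  by exists (Ordinal hi); rewrite rowK /= nth_index.
Qed.

Lemma mxofs_incl m (l1 l2 : seq 'rV[K]_m) : {subset l1 <= l2} -> (mxofs l1 <= mxofs l2)%MS.
Proof.
move=> h; apply/row_subP => i.
have /h /(mxofs_row l2 _).2 [j <-] : row i (mxofs l1) \in l1 by apply/(mxofs_row l1 _).1; exists i.
exact: row_sub.
Qed.

Lemma mxofs_subP m (l : seq 'rV[K]_m) p (X : 'M_(p, m)) :
  (forall u, u \in l -> (u <= X)%MS) -> (mxofs l <= X)%MS.
Proof.
move=> h; apply/row_subP => i; apply: h; apply/(mxofs_row l _).1; by exists i.
Qed.

Lemma mem_mxofs m (l : seq 'rV[K]_m) u : u \in l -> (u <= mxofs l)%MS.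
Proof. by move/(mxofs_row l _).2 => [i <-]; exact: row_sub. Qed.

Lemma mxofs1 v (b : 'rV[K]_(d v)) (X : 'M[K]_(d v)) :
  b != 0 -> (b <= X)%MS -> \rank X = 1%N ->
  row_free (mxofs [:: b]) /\ (mxofs [:: b] == X)%MS.
Proof.
move=> bn0 bX rk.
have e1 : (mxofs [:: b] <= b)%MS by apply: mxofs_subP => u; rewrite inE => /eqP ->.
have e2 : (b <= mxofs [:: b])%MS by apply: mem_mxofs; rewrite inE.
have rb : \rank (mxofs [:: b]) = 1%N.
  have := mxrankS e2; rewrite rank_rV bn0 /= => h.
  by apply/eqP; rewrite eqn_leq h andbT; exact: (rank_leq_row (mxofs [:: b])).
have sX : (mxofs [:: b] <= X)%MS by apply: submx_trans e1 bX.
split; first by rewrite /row_free rb.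
by rewrite -(mxrank_leqif_eq sX).2 rb rk.
Qed.

Lemma mxofs0 v (X : 'M[K]_(d v)) : X = 0 ->
  row_free (mxofs ([::] : seq 'rV[K]_(d v))) /\ (mxofs [::] == X)%MS.
Proof.
move=> ->; split; first by rewrite /row_free -leqn0 rank_leq_row.
by apply/andP; split; [apply: mxofs_subP => u; rewrite in_nil | exact: sub0mx].
Qed.


Lemma rb_basis T U c b B : @rad_basis K Q M T U c b B ->
  forall v, exists l : seq 'rV[K]_(d v),
    row_free (mxofs l) /\ (mxofs l == U v)%MS /\ forall u, B (ex v u) <-> u \in l.
Proof.
move=> RB0; elim: RB0 => {T U c b B}.
- move=> T U c b B Tc Up rk Uz bn0 bU hB v.
  case: (classic (v = c)) => [e|vc].
  + subst v; have [h1 h2] := mxofs1 bn0 bU rk; exists [:: b]; split => //; split => // u.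
    rewrite hB inE; split; [by move/exE2 => ->; rewrite eqxx | by move/eqP ->].
  + have := Uz v vc => /eqmx0P z; have [h1 h2] := mxofs0 z; exists [::]; split => //; split => // u.
    by rewrite hB in_nil; split => // /exP1.
- move=> T U c b B n N al0 bs Bs Tc Uind rk ex2 bn0 bU Np Nsum Nind Nhom Nal Nrb IH hB v.
  have RB : @rad_basis K Q M T U c b B by eapply rad_step; eassumption.
  case: (classic (v = c)) => [e|vc].
    subst v; have [h1 h2] := mxofs1 bn0 bU rk; exists [:: b]; split => //; split => // u.
    by rewrite (rb_center RB) inE; split; [move=> ->; rewrite eqxx | move/eqP].
  case: (classic (T v)) => Tv; last first.
    have z : U v = 0 by apply/eqmx0P; exact: Uind.1.1 v Tv.
    have [h1 h2] := mxofs0 z; exists [::]; split => //; split => // u.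
    rewrite in_nil; split => // /(rb_elems RB) [un0 uU]; move: uU.
    by rewrite z submx0 (negbTE un0).
  have Rv : remove_vertex T c v by split.
  have [NsumV dirV] := Nsum v Rv.
  pose ls j := proj1_sig (constructive_indefinite_description _ (IH j v)).
  have lsP : forall j, row_free (mxofs (ls j)) /\ (mxofs (ls j) == N j v)%MS /\
                       (forall u, Bs j (ex v u) <-> u \in ls j).
    move=> j; exact: (proj2_sig (constructive_indefinite_description _ (IH j v))).
  pose fl := flatten [seq ls j | j <- enum 'I_n].
  have memfl : forall u, u \in fl <-> exists j, u \in ls j.
    move=> u; split.
    - by case/flattenP => s0 /mapP [j _ ->] hu; exists j.
    - move=> [j hj]; apply/flattenP; exists (ls j) => //; apply/mapP; exists j => //.
      by rewrite mem_enum.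
  have fle : (mxofs fl == U v)%MS.
    apply/andP; split.
    - apply: mxofs_subP => u /memfl [j hj].
      have := mem_mxofs hj; case/andP: (lsP j).2.1 => h1 _ h2.
      apply: submx_trans (submx_trans h2 h1) _.
      case/andP: NsumV => h3 _; apply: submx_trans h3; exact: (sumsmx_sup j).
    - case/andP: NsumV => _ h3; apply: submx_trans h3 _.
      apply/sumsmx_subP => j _; case/andP: (lsP j).2.1 => _ h4; apply: submx_trans h4 _.
      by apply: mxofs_incl => u hu; apply/memfl; exists j.
  exists fl; split; last split => //.
  - rewrite /row_free (eqmx_rank fle) -(eqmx_rank NsumV).
    have -> : \rank (\sum_i N i v) = (\sum_i \rank (N i v))%N by apply/mxdirectP.
    rewrite size_flatten sumnE /shape -map_comp big_map big_enum /=.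
    apply/eqP; apply: eq_bigr => j _.
    rewrite -(eqmx_rank (lsP j).2.1); apply/eqP; case: (lsP j) => h _; exact: h.
  - move=> u; rewrite hB memfl; split.
    + case=> [/exP1 //|[j hj]]; exists j; exact: (((lsP j).2.2 u).1 hj).
    + by move=> [j hj]; right; exists j; exact: (((lsP j).2.2 u).2 hj).
Qed.
End Basis.

Theorem corollary2 (K : fieldType) (Q : quiver) (M : rep K Q)
    (x : vertex Q) (B : elt M -> Prop) :
  is_tree Q -> locally_finite Q -> finite_dim M ->
  exceptional M -> radiation_basis M x B ->
  forall al : arrow Q, rdim M (src al) = rdim M (tgt al) ->
  exists (n : nat) (Ey : 'M[K]_(n, rdim M (src al))) (Ez : 'M[K]_(n, rdim M (tgt al))),
    ordered_basis_of M B (src al) Ey /\ ordered_basis_of M B (tgt al) Ez /\ Ey *m rmap M al = Ez.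
Proof.
move=> tree _ _ [_ hext] [b RB] al hd.
have Afree := ext_free hext hd.
have H : ((full_family M) (src al) *m rmap M al == full_family M (tgt al))%MS.
  rewrite /full_family mul1mx; apply/andP; split; first exact: submx1.
  by move: (Afree); rewrite sub1mx /row_free /row_full => /eqP ->; rewrite hd.
have [fw bw] := claim tree Afree RB H.
have [l [lf [le lm]]] := rb_basis RB (src al).
have rfull : row_full (mxofs l).
  by rewrite -sub1mx; case/andP: le.
exists (size l), (mxofs l), (mxofs l *m rmap M al).
split; last split => //.
- split => //; split => // u; rewrite lm; split.
  + by move/(mxofs_row l u).2.
  + by move/(mxofs_row l u).1.
- split; first by rewrite /row_free (mxrankMfree _ Afree).
  split; first by move: (rfull); rewrite /row_full (mxrankMfree _ Afree) => /eqP ->; rewrite hd.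
  move=> w; split.
  + move/bw => [u [hu ->]]; move/lm/(mxofs_row l u).2: hu => [i <-].
    by exists i; rewrite row_mul.
  + move=> [i <-]; rewrite row_mul; apply: fw; apply/lm.
    by apply/(mxofs_row l _).1; exists i.
Qed.
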